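(* Let $\Bbbk$ be a field and $f(t)=1+\sum_{k\ge 1}a_kt^k\in\Bbbk[[t]]$. For $k\ge 0$ let $P_{f,k}(t)\in\Bbbk[t]$ be the polynomial $$P_{f,k}(t)=(-1)^k\det\begin{pmatrix} 1&a_1t&a_2t^2&\ldots &a_kt^k\\ 1&a_1&a_2&\ldots &a_k\\ 0&1&a_1&\ldots &a_{k-1}\\ \vdots&\vdots&\ddots&\ddots&\vdots\\ 0&0&\ldots &1&a_1 \end{pmatrix}$$ (a $(k+1)\times(k+1)$ determinant whose first row is $(1,a_1t,\dots,a_kt^k)$, second row $(1,a_1,\dots,a_k)$, and whose row $r\ge 3$ has $0$ in its first $r-2$ entries, $1$ in entry $r-1$, and then $a_1,a_2,\dots$), with the convention $P_{f,0}(t)=1$. Then, as formal power series in $x$ with coefficients in $\Bbbk[t]$, $$\frac{f(tx)}{f(x)}=\sum_{k\ge 0}P_{f,k}(t)\,x^k,$$ and for all $k\ge 0$, $$P_{f,k}(st)=\sum_{i=0}^k P_{f,i}(s)\,P_{f,k-i}(t)\,t^i$$ as polynomials in the independent variables $s,t$. *)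

(* Defs.v *)
From HB Require Import structures.
From mathcomp Require Import all_boot all_order all_algebra.
Set Implicit Arguments. Unset Strict Implicit. Unset Printing Implicit Defensive.
Import Order.TTheory GRing.Theory Num.Theory.
Local Open Scope ring_scope.

Definition fps (R : Type) := nat -> R.

Definition fps_mul (R : pzRingType) (g h : fps R) : fps R :=
  fun n => \sum_(i < n.+1) g i * h (n - i)%N.

(* Coefficients 0..n of the multiplicative inverse of g (valid when g 0 is
   a unit): b_0 = (g 0)^-1, b_m = - (g 0)^-1 * \sum_{i=1}^m g_i b_{m-i}. *)
Fixpoint fps_inv_seq (R : unitRingType) (g : fps R) (n : nat) : seq R :=
  match n with
  | 0 => [:: (g 0%N)^-1]
  | m.+1 => let s := fps_inv_seq g m in
      rcons s (- ((g 0%N)^-1 * \sum_(i < m.+1) g i.+1 * nth 0 s (m - i)%N))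
  end.

Definition fps_inv (R : unitRingType) (g : fps R) : fps R :=
  fun n => nth 0 (fps_inv_seq g n) n.

Definition fps_div (R : unitRingType) (g h : fps R) : fps R :=
  fps_mul g (fps_inv h).

(* f(t) = 1 + \sum_{k>=1} a_k t^k : the coefficient sequence of f
   (the value a 0 is ignored; the constant term is 1). *)
Definition fcoef (K : fieldType) (a : nat -> K) (n : nat) : K :=
  if n == 0%N then 1 else a n.

(* The (k+1)x(k+1) matrix of the paper, entries in k[t] ('X = t). *)
Definition Pmat (K : fieldType) (a : nat -> K) (k : nat) : 'M[{poly K}]_k.+1 :=
  \matrix_(r < k.+1, j < k.+1)
    if r == 0 :> nat then fcoef a j *: 'X^j
    else if (r.-1 <= j)%N then (fcoef a (j - r.-1)%N)%:P else 0.

(* P_{f,k}(t) = (-1)^k det(...); for k = 0 this is det [1] = 1. *)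
Definition Pfk (K : fieldType) (a : nat -> K) (k : nat) : {poly K} :=
  (-1) ^+ k * \det (Pmat a k).

(* f(tx) and f(x) as power series in x with coefficients in k[t]. *)
Definition f_tx (K : fieldType) (a : nat -> K) : fps {poly K} :=
  fun n => fcoef a n *: 'X^n.
Definition f_x (K : fieldType) (a : nat -> K) : fps {poly K} :=
  fun n => (fcoef a n)%:P.

(* Main.v *)
Require Import Defs.
From HB Require Import structures.
From mathcomp Require Import all_boot all_order all_algebra zify ring.
Import Order.TTheory GRing.Theory Num.Theory.
Local Open Scope ring_scope.

Lemma eq_fps_mul (R : pzRingType) (g g' h h' : fps R) n :
  (forall i, g i = g' i) -> (forall i, h i = h' i) ->
  fps_mul g h n = fps_mul g' h' n.
Proof. by move=> Hg Hh; apply: eq_bigr => i _; rewrite Hg Hh. Qed.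

Lemma fps_coefM (R : nzRingType) (p q : {poly R}) (g h : fps R) m :
  (forall i, (i <= m)%N -> p`_i = g i) -> (forall i, (i <= m)%N -> q`_i = h i) ->
  (p * q)`_m = fps_mul g h m.
Proof.
move=> Hp Hq; rewrite coefM; apply: eq_bigr => i _.
by rewrite Hp ?Hq // ?leq_subr // -ltnS.
Qed.

Definition Pn {R : nzRingType} (g : fps R) n : {poly R} := \poly_(i < n.+1) g i.

Lemma coef_Pn (R : nzRingType) (g : fps R) n i : (i <= n)%N -> (Pn g n)`_i = g i.
Proof. by move=> H; rewrite coef_poly ltnS H. Qed.

Lemma fps_mulA (R : nzRingType) (g h l : fps R) n :
  fps_mul (fps_mul g h) l n = fps_mul g (fps_mul h l) n.
Proof.
have E1 : ((Pn g n * Pn h n) * Pn l n)`_n = fps_mul (fps_mul g h) l n.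
  apply: fps_coefM => i Hi; last exact: coef_Pn.
  by apply: fps_coefM => j Hj; apply: coef_Pn; apply: leq_trans Hi.
have E2 : (Pn g n * (Pn h n * Pn l n))`_n = fps_mul g (fps_mul h l) n.
  apply: fps_coefM => i Hi; first exact: coef_Pn.
  by apply: fps_coefM => j Hj; apply: coef_Pn; apply: leq_trans Hi.
by rewrite -E1 -E2 mulrA.
Qed.

Lemma fps_mulC (R : comNzRingType) (g h : fps R) n :
  fps_mul g h n = fps_mul h g n.
Proof.
rewrite -(@fps_coefM _ (Pn g n) (Pn h n)) => [||i Hi]; try exact: coef_Pn.
by rewrite mulrC; apply: fps_coefM => i Hi; apply: coef_Pn.
Qed.

Definition fdelta {R : pzRingType} : fps R := fun n => (n == 0%N)%:R.

Lemma fps_mul1 (R : pzRingType) (g : fps R) n : fps_mul g (@fdelta R) n = g n.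
Proof.
rewrite /fps_mul big_ord_recr /= subnn /fdelta eqxx mulr1 big1 ?add0r // => i _.
by rewrite subn_eq0 leqNgt ltn_ord mulr0.
Qed.

Lemma size_inv_seq (R : unitRingType) (g : fps R) n : size (fps_inv_seq g n) = n.+1.
Proof. by elim: n => [|n IH] //=; rewrite size_rcons IH. Qed.

Lemma nth_inv_seq (R : unitRingType) (g : fps R) n i :
  (i <= n)%N -> nth 0 (fps_inv_seq g n) i = fps_inv g i.
Proof.
elim: n => [|n IH]; first by rewrite leqn0 => /eqP->.
rewrite leq_eqVlt => /orP[/eqP->//|Hi].
by rewrite /= nth_rcons size_inv_seq Hi IH.
Qed.

Lemma fps_invS (R : unitRingType) (g : fps R) m :
  fps_inv g m.+1 = - ((g 0%N)^-1 * \sum_(i < m.+1) g i.+1 * fps_inv g (m - i)%N).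
Proof.
rewrite {1}/fps_inv /= nth_rcons size_inv_seq ltnn eqxx.
congr (- (_ * _)); apply: eq_bigr => i _; by rewrite nth_inv_seq // leq_subr.
Qed.

Lemma fps_mulinv (R : unitRingType) (g : fps R) n : g 0%N = 1 ->
  fps_mul g (fps_inv g) n = @fdelta R n.
Proof.
move=> g0; case: n => [|m].
  by rewrite /fps_mul big_ord1 /fps_inv /= g0 invr1 mulr1.
rewrite /fps_mul big_ord_recl /= fps_invS g0 invr1 mul1r mul1r.
rewrite [X in _ + X](eq_bigr (fun i : 'I_m.+1 => g i.+1 * fps_inv g (m - i)%N)).
  by rewrite addNr.
by move=> i _; rewrite /bump /= add1n subSS.
Qed.

Lemma f_x0 (K : fieldType) (a : nat -> K) : f_x a 0%N = 1.
Proof. by rewrite /f_x /fcoef eqxx. Qed.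

Lemma key_sum (K : fieldType) (a : nat -> K) (d j n : nat) : (j <= n)%N ->
  \sum_(k < n.+1) ((if (d <= k)%N then (fcoef a (k - d))%:P else 0) *
     (if (k <= j)%N then fps_inv (f_x a) (j - k)%N else 0)) = (j == d)%:R.
Proof.
move=> Hjn.
have [Hdj|Hjd] := leqP d j; last first.
  rewrite big1 ?(ltn_eqF Hjd) // => k _.
  case: ifP => H1; case: ifP => H2; rewrite ?mulr0 ?mul0r //.
  by move: (leq_trans H1 H2); rewrite leqNgt Hjd.
rewrite -(big_mkord xpredT (fun k => (if (d <= k)%N then (fcoef a (k - d))%:P else 0) *
     (if (k <= j)%N then fps_inv (f_x a) (j - k)%N else 0))).
rewrite (@big_cat_nat _ _ _ d 0 n.+1) /= ?leq0n //; last by apply: leq_trans Hdj (leq_trans Hjn _).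

rewrite big_nat_cond big1 ?add0r; last first.
  by move=> k /andP[/andP[_ Hk] _]; rewrite leqNgt Hk mul0r.
rewrite (big_cat_nat _ (n := j.+1)) //=; last by apply: leq_trans Hdj _.
rewrite [X in _ + X]big_nat_cond [X in _ + X]big1 ?addr0; last first.
  by move=> k /andP[/andP[Hk _] _]; rewrite (leqNgt k j) Hk mulr0.
rewrite -{1}(add0n d) big_addn.
rewrite (eq_big_nat _ _ (F2 := fun k => f_x a k * fps_inv (f_x a) ((j - d) - k)%N)); last first.
  move=> k /andP[_ Hk]; rewrite leq_addl addnK /f_x.
  have -> : (k + d <= j)%N.
    by lia.
  by rewrite addnC subnDA.
rewrite subSn // big_mkord.
have := @fps_mulinv _ _ (j - d)%N (f_x0 _ a); rewrite /fps_mul => ->.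
by rewrite /fdelta subn_eq0 eqn_leq Hdj andbT.
Qed.

Lemma part1 (K : fieldType) (a : nat -> K) n :
  fps_div (f_tx a) (f_x a) n = Pfk a n.
Proof.
set b := fps_inv (f_x a).
set M := Pmat a n.
pose N : 'M[{poly K}]_n.+1 := \matrix_(i, j) if (i <= j)%N then b (j - i)%N else 0.
have b0 : b 0%N = 1 by rewrite /b /fps_inv /= f_x0 invr1.
have detN : \det N = 1.
  rewrite -det_tr det_trig; last first.
    by apply/is_trig_mxP => i j Hij; rewrite !mxE leqNgt Hij.
  by rewrite big1 // => i _; rewrite !mxE leqnn subnn.
have MN0 : (M *m N) ord0 ord_max = fps_mul (f_tx a) b n.
  rewrite mxE /fps_mul; apply: eq_bigr => k _.
  by rewrite !mxE /= -ltnS ltn_ord.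
have MNr : forall r j : 'I_n.+1, r != ord0 -> (M *m N) r j = (j == r.-1 :> nat)%:R.
  move=> r j Hr; rewrite mxE -(key_sum _ a r.-1 j n (ltnSE (ltn_ord j))).
  apply: eq_bigr => k _; rewrite !mxE.
  by move: Hr; rewrite -(inj_eq val_inj) /= => /negbTE ->.
have detMN : \det (M *m N) = (-1) ^+ n * fps_mul (f_tx a) b n.
  rewrite (expand_det_col _ ord_max) big_ord_recl big1 ?addr0; last first.
    move=> i _; rewrite MNr // /= add0n gtn_eqF ?mul0r //.
  rewrite MN0 /cofactor add0n.
  have -> : row' ord0 (col' ord_max (M *m N)) = 1%:M.
    apply/matrixP => i j; rewrite [LHS]mxE [LHS]mxE MNr // !mxE /=.
    by rewrite /bump leqNgt ltn_ord /= !add0n eq_sym -(inj_eq val_inj).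
  by rewrite det1 mulr1 mulrC.

rewrite /Pfk -/M.
have -> : \det M = (-1) ^+ n * fps_mul (f_tx a) b n by rewrite -detMN det_mulmx detN mulr1.
by rewrite mulrA -exprMn mulrNN mulr1 expr1n mul1r.
Qed.

Lemma uniq_mul (R : pzRingType) (A B c : fps R) : c 0%N = 1 ->
  (forall n, fps_mul A c n = fps_mul B c n) -> forall n, A n = B n.
Proof.
move=> c0 H; elim/ltn_ind => n IH.
have := H n; rewrite /fps_mul !big_ord_recr /= subnn c0 !mulr1.
rewrite (eq_bigr (fun i : 'I_n => B i * c (n - i)%N)).
  by move/addrI.
by move=> i _; rewrite IH.
Qed.

Lemma E1 (K : fieldType) (a : nat -> K) m :
  fps_mul (Pfk a) (f_x a) m = f_tx a m.
Proof.
rewrite (@eq_fps_mul _ _ (fps_mul (f_tx a) (fps_inv (f_x a))) _ (f_x a)) //; last first.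
  by move=> i; rewrite -part1.
rewrite fps_mulA (@eq_fps_mul _ _ (f_tx a) _ fdelta) ?fps_mul1 // => i.
by rewrite fps_mulC fps_mulinv // f_x0.
Qed.

Definition Phi {K : fieldType} (p : {poly K}) : {poly {poly K}} :=
  p^:P \Po ('X * ('X)%:P).

Lemma PhiD (K : fieldType) (p q : {poly K}) : Phi (p + q) = Phi p + Phi q.
Proof. by rewrite /Phi rmorphD comp_polyD. Qed.
Lemma PhiM (K : fieldType) (p q : {poly K}) : Phi (p * q) = Phi p * Phi q.
Proof. by rewrite /Phi rmorphM comp_polyM. Qed.
Lemma Phi0 (K : fieldType) : Phi (0 : {poly K}) = 0.
Proof. by rewrite /Phi rmorph0 comp_poly0. Qed.
Lemma PhiC (K : fieldType) (c : K) : Phi c%:P = c%:P%:P.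
Proof. by rewrite /Phi map_polyC comp_polyC. Qed.
Lemma PhiXn (K : fieldType) n : Phi ('X^n : {poly K}) = ('X * ('X)%:P) ^+ n.
Proof. by rewrite /Phi map_polyXn comp_Xn_poly. Qed.

Lemma part2 (K : fieldType) (a : nat -> K) (P : nat -> {poly K})
  (HE : forall m, fps_mul P (f_x a) m = f_tx a m) k :
  (P k)^:P \Po ('X * ('X)%:P) =
     \sum_(i < k.+1) (P i)^:P * (P (k - i)%N * 'X^i)%:P.
Proof.
pose C : fps {poly {poly K}} := fun m => ((fcoef a m)%:P)%:P.
pose G : fps {poly {poly K}} := fun n => C n * ('X * ('X)%:P) ^+ n.
pose L : fps {poly {poly K}} := fun n => Phi (P n).
pose U : fps {poly {poly K}} := fun i => (P i)^:P * ('X^i)%:P.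
pose V : fps {poly {poly K}} := fun j => (P j)%:P.
pose R : fps {poly {poly K}} := fun m =>
  \sum_(i < m.+1) (P i)^:P * (P (m - i)%N * 'X^i)%:P.
have C0 : C 0%N = 1 by rewrite /C /fcoef eqxx.
have HL : forall n, fps_mul L C n = G n.
  move=> n; rewrite /G /L /C.
  have -> : fps_mul (fun n => Phi (P n)) C n = Phi (fps_mul P (f_x a) n).
    rewrite /fps_mul (big_morph _ (@PhiD K) (@Phi0 K)); apply: eq_bigr => i _.
    by rewrite [RHS]PhiM /f_x PhiC.
  by rewrite HE /f_tx -mul_polyC PhiM PhiC PhiXn.
have HV : forall m, fps_mul V C m = (f_tx a m)%:P.
  move=> m; rewrite -HE /fps_mul rmorph_sum; apply: eq_bigr => i _.
  by rewrite rmorphM.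
have HR : forall n, fps_mul R C n = G n.
  move=> n.
  rewrite (@eq_fps_mul _ _ (fps_mul U V) _ C) //; last first.
    move=> m; rewrite /R /fps_mul; apply: eq_bigr => i _.
    by rewrite /U /V polyCM mulrA mulrAC.
  rewrite fps_mulA (@eq_fps_mul _ _ U _ (fun m => (f_tx a m)%:P)) //.
  have -> : G n = (f_tx a n)^:P * ('X^n)%:P.
    rewrite /G /C /f_tx -mul_polyC rmorphM /= map_polyC map_polyXn /=.
    by rewrite exprMn rmorphXn mulrA.
  rewrite -HE /fps_mul rmorph_sum big_distrl; apply: eq_big => // i _.
  have Hi : (i <= n)%N by rewrite -ltnS.
  have -> : ('X^n : {poly K})%:P = ('X^i)%:P * ('X^(n - i))%:P :> {poly {poly K}}.
    by rewrite -polyCM -exprD subnKC.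
  rewrite /U /f_tx -mul_polyC polyCM /f_x /=.
  rewrite [map_poly _ (_ * _)]rmorphM /=.
  rewrite map_polyC /=.
  ring.
have := @uniq_mul _ L R C C0 (fun n => etrans (HL n) (esym (HR n))) k.
by rewrite /L /R /Phi.
Qed.

Theorem theorem1p1 (K : fieldType) (a : nat -> K) :
  (forall n : nat, fps_div (f_tx a) (f_x a) n = Pfk a n) /\
  (forall k : nat,
     (Pfk a k)^:P \Po ('X * ('X)%:P) =
     \sum_(i < k.+1) (Pfk a i)^:P * (Pfk a (k - i)%N * 'X^i)%:P).
Proof. split; [exact: part1 | move=> k; exact: (@part2 K a (Pfk a) (E1 K a) k)]. Qed.
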